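(* Let $\mathbf{p}=(p_d)_{d\ge0}$ and $\mathbf{q}=(q_w)_{w\ge0}$ be probability distributions on the nonnegative integers with $\lambda=\sum_d d p_d\in(0,\infty)$, $\mu=\sum_w w q_w\in(0,\infty)$, $p_d=0$ for $d>\bar d$, $q_w=0$ for $w>\bar w$ (for some integers $\bar d,\bar w\ge1$), and $p_0=q_0=q_1=0$. Let $X$ be the random variable with $$\mathbb{P}(X=k)=\sum_{d=1}^{\bar d}\frac{d p_d}{\lambda}\sum_{(w_1-1)+\dots+(w_{d-1}-1)=k}\frac{\prod_{j=1}^{d-1}w_jq_{w_j}}{\mu^{d-1}},$$ the inner sum being over tuples of positive integers $(w_1,\dots,w_{d-1})$. Let $q\in(0,1)$, $w\ge2$, and consider a clique of size $w$ with initially active parent $u$ and children $1,\dots,w-1$, where the numbers $X_1,\dots,X_{w-1}$ of own children of these vertices are i.i.d. distributed as $X$, the contagion being as described in the context; let $L$ be the final number of active vertices among $1,\dots,w-1$ and $X_{(1)}\le\dots\le X_{(w-1)}$ the order statistics of the $X_i$. Then for any $1\le\ell\le w-1$ and any integers $0\le x_1\le x_2\le\dots\le x_\ell$, $$\mathbb{P}(L=\ell,X_{(1)}=x_1,\dots,X_{(\ell)}=x_\ell)=\Big(\prod_{i=1}^{\ell}\mathbb{1}_{\{\lfloor q(x_i+w-1)\rfloor+1\le i\}}\Big)\frac{(w-1)!}{(w-1-\ell)!\,\prod_{i=1}^{\ell-1}s_i!}\Big(\prod_{i=1}^{\ell}\mathbb{P}(X=x_i)\Big)\Big(\mathbb{P}\big(\lfloor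 q(X+w-1)\rfloor>\ell\big)\Big)^{w-1-\ell},$$ and $$\mathbb{P}(L=0)=\Big(\mathbb{P}\big(\lfloor q(X+w-1)\rfloor>0\big)\Big)^{w-1}.$$
   Context: Contagion inside the clique: vertex $i\in\{1,\dots,w-1\}$ has as neighbors the other $w-1$ vertices of the clique (including $u$) and $X_i$ further vertices (its own children), which are inactive and remain inactive; thus its degree is $X_i+w-1$. Initially only $u$ is active; in discrete time, an inactive vertex becomes active as soon as its proportion of active neighbors is strictly greater than $q$, and active vertices remain active. For a nondecreasing sequence $x_1\le\dots\le x_\ell$ and $i\in\{1,\dots,\ell-1\}$: $s_i=\max\{j\ge0\mid x_i=x_{i+j}\}+1$ if $i=1$ or $x_{i-1}<x_i$, and $s_i=1$ if $x_{i-1}=x_i$ (so that when $x_{i-1}<x_i$ or $i=1$, $s_i$ is the number of indices $i'\ge i$ with $x_{i'}=x_i$; e.g. for $x_1<x_2=x_3=x_4<x_5=x_6$, $\prod_{i=1}^5 s_i!=3!\,2!$). *)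

(* Defs.v *)
From HB Require Import structures.
From mathcomp Require Import all_boot all_order all_algebra.
From mathcomp Require Import reals.
Set Implicit Arguments. Unset Strict Implicit. Unset Printing Implicit Defensive.
Import Order.TTheory GRing.Theory Num.Theory.
Local Open Scope ring_scope.

Definition mean (R : realType) (p : nat -> R) (dbar : nat) : R :=
  \sum_(d < dbar.+1) (d%:R * p d).

(* The constraint sum (w_j - 1) = k forces w_j <= k+1, so ranging the w_j over
   'I_(k.+2) (i.e. 0..k+1) and requiring w_j > 0 is exactly the set of tuples
   of positive integers in the paper. *)
Definition pX (R : realType) (p qw : nat -> R) (dbar wbar : nat) (k : nat) : R :=
  \sum_(1 <= d < dbar.+1)
    (d%:R * p d / mean p dbar) *
    (\sum_(f : {ffun 'I_(d.-1) -> 'I_(k.+2)}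
            | [forall j, (0 < (f j : nat))%N] && (\sum_j (f j : nat).-1 == k)%N)
       (\prod_j ((f j : nat)%:R * qw (f j))) / (mean qw wbar) ^+ d.-1).

(* X takes values in [0, (dbar-1)(wbar-1)]; Xsupp is a strict upper bound on
   its support, used to write probabilities as finite sums. *)
Definition Xsupp (dbar wbar : nat) : nat := (dbar.-1 * wbar.-1).+1.

Definition PrX (R : realType) (p qw : nat -> R) (dbar wbar : nat)
    (P0 : pred nat) : R :=
  \sum_(k < Xsupp dbar wbar | P0 k) pX p qw dbar wbar k.

(* One step of the contagion inside the clique {u, 1, ..., w-1}; children are
   indexed by 'I_(w-1); x i = X_i; A = set of active children (u always active).
   An inactive child i has 1 + #|A| active neighbours (u and the active
   children) out of its degree x i + w - 1. *)
Definition step (R : realType) (q : R) (w : nat) (x : 'I_(w - 1) -> nat)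
    (A : {set 'I_(w - 1)}) : {set 'I_(w - 1)} :=
  A :|: [set i | q < (1 + #|A|)%:R / (x i + (w - 1))%:R].

(* final number of active children; the set of active children increases
   strictly until it is stable, hence is stable after w-1 steps *)
Definition finalL (R : realType) (q : R) (w : nat) (x : 'I_(w - 1) -> nat) : nat :=
  #|iter (w - 1) (step q x) set0|.

Definition order_stats (w : nat) (x : 'I_(w - 1) -> nat) : seq nat :=
  sort leq [seq x i | i <- enum 'I_(w - 1)].

Definition PrIID (R : realType) (p qw : nat -> R) (dbar wbar w : nat)
    (E : ('I_(w - 1) -> nat) -> bool) : R :=
  \sum_(x : {ffun 'I_(w - 1) -> 'I_(Xsupp dbar wbar)})
     (\prod_i pX p qw dbar wbar (x i)) * (E (fun i => (x i : nat)))%:R.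

(* s_i of the context, with 0-based index i (paper's s_{i+1}) *)
Definition s_mult (xs : seq nat) (i : nat) : nat :=
  if (i == 0)%N || (nth 0 xs i.-1 < nth 0 xs i)%N then
    (\max_(j < size xs - i | nth 0 xs (i + j) == nth 0 xs i) (j : nat)).+1
  else 1.

(* Main.v *)
Require Import Defs.
From HB Require Import structures.
From mathcomp Require Import all_boot all_order all_algebra.
From mathcomp Require Import reals.
From mathcomp Require Import ring lra.
Import Order.TTheory GRing.Theory Num.Theory.
Set Implicit Arguments. Unset Strict Implicit. Unset Printing Implicit Defensive.
Local Open Scope ring_scope.

Section Count.
Variable R : realType.
Variable N : nat.
Variable P : pred nat.
Variable f : nat -> R.

Definition consf n (a : 'I_N) (y : {ffun 'I_n -> 'I_N}) : {ffun 'I_n.+1 -> 'I_N} :=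
  [ffun i => if unlift ord0 i is Some j then y j else a].

Lemma sum_ffunS n (F : {ffun 'I_n.+1 -> 'I_N} -> R) :
  \sum_(x : {ffun 'I_n.+1 -> 'I_N}) F x
  = \sum_(a : 'I_N) \sum_(y : {ffun 'I_n -> 'I_N}) F (consf a y).
Proof.
rewrite pair_bigA /=.
rewrite (reindex (fun p : 'I_N * {ffun 'I_n -> 'I_N} => consf p.1 p.2)) //=.
exists (fun x : {ffun 'I_n.+1 -> 'I_N} => (x ord0, [ffun j => x (lift ord0 j)])).
- move=> [a y] _ /=; rewrite /consf /= ffunE unlift_none; congr pair.
  by apply/ffunP => j; rewrite !ffunE liftK.
- move=> x _; apply/ffunP => i; rewrite /consf !ffunE.
  by case: unliftP => [j ->|->]; rewrite ?ffunE.
Qed.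

Lemma map_consf n a y :
  [seq (consf a y i : nat) | i <- enum 'I_n.+1]
  = (a : nat) :: [seq (y i : nat) | i <- enum 'I_n].
Proof.
rewrite enum_ordSl /= /consf ffunE unlift_none; congr cons.
rewrite -map_comp; apply: eq_map => j /=; by rewrite ffunE liftK.
Qed.

Lemma prod_consf n a y :
  \prod_(i < n.+1) f (consf a y i) = f a * \prod_(i < n) f (y i).
Proof.
rewrite big_ord_recl /consf ffunE unlift_none; congr (_ * _).
by apply: eq_bigr => j _; rewrite ffunE liftK.
Qed.

Lemma perm_cons_rem (a : nat) s t :
  perm_eq (a :: s) t = (a \in t) && perm_eq s (rem a t).
Proof.
case: (boolP (a \in t)) => h /=.
  by rewrite (permPr (perm_to_rem h)) perm_cons.
apply/negbTE; apply: contra h => /perm_mem <-; exact: mem_head.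
Qed.

Definition Fc n xs :=
  \sum_(x : {ffun 'I_n -> 'I_N}) (\prod_i f (x i)) *
     (perm_eq [seq v <- [seq (x i : nat) | i <- enum 'I_n] | P v] xs)%:R.

Definition acoef := \sum_(k < N | ~~ P k) f k.

Definition Mc (xs : seq nat) := (\prod_(k < N) (count_mem (k : nat) xs)`!)%N.

Lemma Fc_big n xs : (n < size xs)%N -> Fc n xs = 0.
Proof.
move=> h; apply: big1 => x _.
case: (boolP (perm_eq _ _)) => [/perm_size hs|]; last by rewrite mulr0.
move: h; rewrite -hs size_filter.
by move: (count_size P [seq (x i : nat) | i <- enum 'I_n]); rewrite size_map size_enum_ord => h1 h2;
  have := leq_ltn_trans h1 h2; rewrite ltnn.
Qed.

Lemma Fc_rec n xs :
  Fc n.+1 xs = acoef * Fc n xs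
             + \sum_(k < N | P k && ((k : nat) \in xs)) f k * Fc n (rem (k : nat) xs).
Proof.
rewrite /Fc sum_ffunS (bigID (fun k : 'I_N => P k)) /= addrC.
congr (_ + _).
  rewrite /acoef mulr_suml; apply: eq_bigr => k hk; rewrite mulr_sumr.
  apply: eq_bigr => y _; rewrite prod_consf map_consf /= (negbTE hk) mulrA //.
rewrite (bigID (fun k : 'I_N => (k : nat) \in xs)) /= [X in _ + X]big1 ?addr0.
  apply: eq_big => [k|k /andP[hk hx]]; first by [].
  rewrite mulr_sumr; apply: eq_bigr => y _.
  by rewrite prod_consf map_consf /= hk perm_cons_rem hx mulrA.
move=> k /andP[hk hx]; apply: big1 => y _.
by rewrite map_consf /= hk perm_cons_rem (negbTE hx) mulr0.
Qed.

Lemma count_rem_perm (k j : nat) xs : k \in xs ->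
  count_mem j xs = ((k == j) + count_mem j (rem k xs))%N.
Proof. by move=> h; rewrite (permP (perm_to_rem h)) /=. Qed.

Lemma Mc_rem (k : 'I_N) xs : (k : nat) \in xs ->
  Mc xs = (count_mem (k : nat) xs * Mc (rem (k : nat) xs))%N.
Proof.
move=> h; rewrite /Mc (bigD1 k) //= [in RHS](bigD1 k) //= mulnA.
congr (_ * _)%N.
  rewrite (count_rem_perm _ h) eqxx add1n factS //.
apply: eq_bigr => j hj; rewrite (count_rem_perm _ h).
by have -> : (k == j :> nat) = false by apply/negbTE; rewrite eq_sym.
Qed.

Lemma sum_count_lt xs : all (fun v => v < N)%N xs ->
  (\sum_(k < N) count_mem (k : nat) xs)%N = size xs.
Proof.
elim: xs => [|y ys IH] /=; first by rewrite big1.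
move=> /andP[hy hys]; rewrite big_split /= IH // -add1n; congr (_ + _)%N.
rewrite (bigD1 (Ordinal hy)) //= eqxx big1 // => j hj.
by apply/eqP; rewrite eqb0; apply: contra hj => /eqP h; apply/eqP/val_inj.
Qed.

Lemma Fc0 : Fc 0 [::] = 1.
Proof.
rewrite /Fc (eq_bigr (fun _ => 1)); last first.
  move=> x _; rewrite big_ord0 mul1r.
  by have -> : enum 'I_0 = [::] by apply/size0nil; rewrite size_enum_ord.
by rewrite sumr_const card_ffun !card_ord expn0.
Qed.

Lemma Mc_nil : Mc [::] = 1%N.
Proof. by rewrite /Mc big1. Qed.

Lemma Fc_closed n xs : all (fun v => P v && (v < N)%N) xs -> (size xs <= n)%N ->
  Fc n xs * ((n - size xs)`! * Mc xs)%:R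
  = (n`!)%:R * (\prod_(v <- xs) f v) * acoef ^+ (n - size xs).
Proof.
elim: n xs => [|n IH] xs hall hsz.
  move: hsz; rewrite leqn0 => /nilP ->.
  by rewrite Fc0 Mc_nil big_nil subnn expr0 fact0 muln1 !mulr1.
set l := size xs.
have T1 : acoef * Fc n xs * ((n.+1 - l)`! * Mc xs)%:R
   = (n.+1 - l)%:R * (n`!)%:R * (\prod_(v <- xs) f v) * acoef ^+ (n.+1 - l).
  case: (leqP l n) => hl.
    have IHn := IH xs hall hl.
    rewrite subSn // factS -mulnA natrM exprS.
    transitivity ((n - l).+1%:R * acoef * (Fc n xs * ((n - l)`! * Mc xs)%:R)); first by ring.
    rewrite IHn; ring.
  have -> : l = n.+1 by apply/eqP; rewrite eqn_leq hsz hl.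
  by rewrite Fc_big ?subnn // mulr0 !mul0r.
rewrite Fc_rec mulrDl T1.
have T2 : forall k : 'I_N, P k && ((k : nat) \in xs) ->
   f k * Fc n (rem (k : nat) xs) * ((n.+1 - l)`! * Mc xs)%:R
   = (count_mem (k : nat) xs)%:R * ((n`!)%:R * (\prod_(v <- xs) f v) * acoef ^+ (n.+1 - l)).
  move=> k /andP[hk hx].
  have hl : (0 < l)%N by rewrite /l; case: (xs) hx.
  have hszr : size (rem (k : nat) xs) = l.-1 by rewrite size_rem.
  have e : (n.+1 - l = n - size (rem (k : nat) xs))%N by rewrite hszr; case: (l) hl.
  have IHk : Fc n (rem (k : nat) xs) * ((n.+1 - l)`!%:R * (Mc (rem (k:nat) xs))%:R)
     = (n`!)%:R * (\prod_(v <- rem (k : nat) xs) f v) * acoef ^+ (n.+1 - l).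
    rewrite e -natrM; apply: IH.
    - by apply/allP => v /mem_rem hv; exact: (allP hall).
    - by rewrite hszr -ltnS prednK.
  rewrite (Mc_rem hx) !natrM.
  transitivity ((count_mem (k : nat) xs)%:R * f k * (Fc n (rem (k : nat) xs) * ((n.+1 - l)`!%:R * (Mc (rem (k:nat) xs))%:R))); first by ring.
  rewrite IHk (perm_big _ (perm_to_rem hx)) /= big_cons; ring.
rewrite mulr_suml (eq_bigr _ T2) -mulr_suml.
have S : \sum_(k < N | P k && ((k : nat) \in xs)) (count_mem (k : nat) xs)%:R = l%:R :> R.
  have hlt : all (fun v => v < N)%N xs.
    by apply: sub_all hall => v /andP[].
  rewrite /l -(sum_count_lt hlt) natr_sum [in RHS](bigID (fun k : 'I_N => P k && ((k : nat) \in xs))) /=.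
  rewrite [X in _ = _ + X]big1 ?addr0 // => k hk.
  have -> : count_mem (k : nat) xs = 0%N; last by [].
  apply/count_memPn; apply: contra hk => hx; rewrite hx andbT.
  by have /andP[] := allP hall _ hx.
rewrite S.
have hl : (l <= n.+1)%N by [].
rewrite factS natrM.
have -> : (n.+1)%:R = (n.+1 - l)%:R + l%:R :> R by rewrite -natrD subnK.
ring.
Qed.
End Count.
Local Close Scope ring_scope.
Local Open Scope nat_scope.
Definition dclosed (P : pred nat) := forall u v, u <= v -> P v -> P u.

Lemma sorted_head_le (y : nat) ys : sorted leq (y :: ys) -> all (leq y) ys.
Proof. by move=> /= h; apply: order_path_min h; exact: leq_trans. Qed.

Lemma nth_dclosed (P : pred nat) xs : sorted leq xs -> dclosed P ->
  forall j, j < size xs -> P (nth 0 xs j) = (j < count P xs).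
Proof.
move=> hs hP; elim: xs hs => [|y ys IH] hs j //= hj.
have hys : sorted leq ys by move: hs => /= /path_sorted.
case: (boolP (P y)) => hy.
  case: j hj => [|j] hj //=; rewrite IH //.
have -> : count P ys = 0.
  apply/eqP; rewrite -leqn0 leqNgt -has_count; apply/hasPn => v hv.
  by apply: contra hy; apply: hP; exact: (allP (sorted_head_le hs)).
case: j hj => [|j] hj /=; first by rewrite (negbTE hy).
apply/negbTE; apply: contra hy; apply: hP.
by apply: (allP (sorted_head_le hs)); apply: mem_nth.
Qed.

Lemma filter_dclosed (P : pred nat) xs : sorted leq xs -> dclosed P ->
  filter P xs = take (count P xs) xs.
Proof.
move=> hs hP; elim: xs hs => [|y ys IH] hs //=.
have hys : sorted leq ys by move: hs => /= /path_sorted.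
case: (boolP (P y)) => hy /=; first by rewrite IH.
have h0 : forall v, v \in ys -> ~~ P v.
  by move=> v hv; apply: contra hy; apply: hP; exact: (allP (sorted_head_le hs)).
have hc : count P ys = 0.
  by apply/eqP; rewrite -leqn0 leqNgt -has_count; apply/hasPn.
by rewrite hc take0; apply/eqP; rewrite -size_eq0 size_filter hc.
Qed.

Lemma s_multE xs i : s_mult xs i =
  if (i == 0) || (nth 0 xs i.-1 < nth 0 xs i) then
    (\max_(j < size xs - i | nth 0 xs (i + j) == nth 0 xs i) j).+1 else 1.
Proof. by []. Qed.

Lemma s_multS y ys i : s_mult (y :: ys) i.+1 =
  if (i == 0) && ~~ (y < nth 0 ys 0) then 1 else s_mult ys i.
Proof.
rewrite !s_multE /=.
have E : \max_(j < (size ys).+1 - i.+1 | nth 0 (y :: ys) (i.+1 + j) == nth 0 ys i) j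
       = \max_(j < size ys - i | nth 0 ys (i + j) == nth 0 ys i) j by rewrite subSS.
rewrite E; case: i {E} => [|i] //=.
by case: (y < nth 0 ys 0).
Qed.

Lemma s_mult0 y ys : sorted leq (y :: ys) -> s_mult (y :: ys) 0 = count_mem y (y :: ys).
Proof.
move=> hs; rewrite s_multE /=.
have hall := sorted_head_le hs.
have hd : dclosed (fun v => v <= y) by move=> u v huv hv; exact: leq_trans huv hv.
have hc : count (fun v => v <= y) (y :: ys) = count_mem y (y :: ys).
  apply: eq_in_count => v; rewrite inE => /orP[/eqP -> | hv]; first by rewrite /= leqnn eqxx.
  by rewrite /= eqn_leq (allP hall v hv) andbT.
have Hsz : count_mem y (y :: ys) <= (size ys).+1 by have := count_size (pred1 y) (y :: ys).
have Hc1 : 0 < count_mem y (y :: ys) by rewrite /= eqxx.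
have key : forall j : 'I_((size ys).+1 - 0),
    (nth 0 (y :: ys) (0 + j) == y) = (j < count_mem y (y :: ys)).
  move=> j; have hj0 : (j : nat) < (size ys).+1 := leq_trans (ltn_ord j) (leq_subr _ _).
  rewrite add0n -hc -(nth_dclosed hs hd) //.
  have hj : nth 0 (y :: ys) j \in y :: ys by apply: mem_nth.
  rewrite inE in hj; case/orP: hj => [/eqP ->|hj]; first by rewrite eqxx leqnn.
  by rewrite eqn_leq (allP hall _ hj) andbT.
rewrite -[RHS]prednK //; congr _.+1; apply/eqP; rewrite eqn_leq; apply/andP; split.
  apply/bigmax_leqP => j; rewrite key => hj; by rewrite -ltnS prednK.
have hi : (count_mem y (y :: ys)).-1 < (size ys).+1 - 0 by rewrite subn0 prednK.
apply: (@leq_bigmax_cond _ _ _ (Ordinal hi)).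
have := key (Ordinal hi); rewrite /= prednK // leqnn => ->.
by [].
Qed.

Lemma fact1 : 1`! = 1. Proof. by []. Qed.

Definition Pf xs := \prod_(i < size xs) (s_mult xs i)`!.

Lemma Pf_cons y ys : sorted leq (y :: ys) -> Pf (y :: ys) = ((count_mem y ys).+1 * Pf ys)%N.
Proof.
move=> hs; rewrite /Pf big_ord_recl s_mult0 //= eqxx add1n.
rewrite [in LHS](eq_bigr (fun i : 'I_(size ys) =>
   (if (i == 0 :> nat) && ~~ (y < nth 0 ys 0) then 1 else s_mult ys i)`!)); last first.
  by move=> i _; rewrite /bump add1n s_multS.
case: ys hs => [|z zs] hs; first by rewrite !big_ord0 /= muln1.
have hyz : y <= z by move: hs => /= /andP[].
have hzs : sorted leq (z :: zs) by move: hs => /= /andP[].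
rewrite leq_eqVlt in hyz; case/orP: hyz => [/eqP eyz|lyz].
  subst z; rewrite /= ltnn /= big_ord_recl [in RHS]big_ord_recl /=.
  rewrite (s_mult0 hzs) /= eqxx fact1 mul1n [in LHS]factS mulnA //.
rewrite /= lyz /=.
rewrite [in LHS](eq_bigr (fun i : 'I_(size zs).+1 => (s_mult (z :: zs) i)`!)); last by move=> i _; rewrite andbF.
have -> : count_mem y zs = 0.
  apply/count_memPn; apply/negP => hy; have := allP (sorted_head_le hzs) _ hy.
  by rewrite leqNgt lyz.
have -> : (z == y) = false by apply/negbTE; rewrite neq_ltn lyz orbT.
by rewrite /= !mul1n.
Qed.

Lemma Mc_cons N y ys : y < N -> Mc N (y :: ys) = ((count_mem y ys).+1 * Mc N ys)%N.
Proof.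
move=> hy; have hm : ((Ordinal hy : nat) \in y :: ys) by rewrite mem_head.
by rewrite (Mc_rem hm) /= eqxx add1n.
Qed.

Lemma Pf_Mc N xs : sorted leq xs -> all (fun v => v < N) xs -> Pf xs = Mc N xs.
Proof.
elim: xs => [|y ys IH] hs hall; first by rewrite /Pf big_ord0 Mc_nil.
move: hall => /= /andP[hy hys].
by rewrite Pf_cons // Mc_cons // IH // (path_sorted hs).
Qed.

Lemma s_mult_last xs : xs != [::] -> s_mult xs (size xs).-1 = 1.
Proof.
move=> hx; rewrite s_multE; case: ifP => // _; congr _.+1; apply/eqP; rewrite -leqn0.
apply/bigmax_leqP => -[j hj] _ /=.
have h1 : size xs - (size xs).-1 = 1 by case: xs hx hj => // ? ? _ _; rewrite /= subSn // subnn.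
by move: hj; rewrite h1 ltnS.
Qed.

Lemma prod_smult xs : (\prod_(i < (size xs).-1) (s_mult xs i)`!)%N = Pf xs.
Proof.
case: xs => [|y ys]; first by rewrite /Pf !big_ord0.
rewrite /Pf /= big_ord_recr /= -[X in s_mult _ X]/((size (y :: ys)).-1) s_mult_last //.
by rewrite muln1.
Qed.
Local Open Scope ring_scope.
Lemma card_count (T : finType) (P : pred T) : #|[set i | P i]| = count P (enum T).
Proof. rewrite cardsE cardE /enum_mem size_filter count_filter. by apply: eq_count => i; rewrite /= andbT. Qed.

Lemma lt_floor_nat (R : realType) (y : R) (m : nat) : (y < m.+1%:R) = (Num.floor y <= m%:Z).
Proof. by rewrite -ltzD1 floor_lt_int -PoszD addn1. Qed.

Lemma iter_fix (c : nat -> nat) n :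
  (forall a b, (a <= b)%N -> (c a <= c b)%N) -> (forall m, (c m <= n)%N) ->
  forall l, iter n c 0%N = l <-> c l = l /\ (forall m, (m < l)%N -> (m < c m)%N).
Proof.
move=> hmono hbd l.
have inc : forall k, (iter k c 0 <= iter k.+1 c 0)%N.
  elim=> [|k IH] //=; exact: hmono.
have fixp : forall k, (k <= iter k c 0)%N \/ c (iter k c 0) = iter k c 0.
  elim=> [|k [IH|IH]]; [by left| |by right; rewrite /= IH].
  case: (boolP (c (iter k c 0) == iter k c 0)) => [/eqP h|h]; first by right; rewrite /= h.
  left; rewrite /=; apply: leq_ltn_trans IH _; rewrite ltn_neqAle eq_sym h.
  exact: (inc k).
have le_n : forall k, (iter k c 0 <= n)%N by case=> //= k; exact: hbd.
have fixn : c (iter n c 0) = iter n c 0.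
  case: (fixp n) => // h; apply/eqP; rewrite eqn_leq; apply/andP; split; last exact: (inc n).
  have e : iter n c 0 = n by apply/eqP; rewrite eqn_leq h le_n.
  by rewrite e hbd.
have below : forall f, c f = f -> forall k, (iter k c 0 <= f)%N.
  move=> f hf; elim=> [|k IH] //=; rewrite -hf; exact: hmono.
have lt_all : forall k m, (m < iter k c 0)%N -> (m < c m)%N.
  elim=> [|k IH] m //= hm.
  case: (ltnP m (iter k c 0)) => h; first exact: IH.
  exact: leq_trans hm (hmono _ _ h).
split.
  by move=> <-; split => //; exact: lt_all.
move=> [hl hlt]; apply/eqP; rewrite eqn_leq below //=.
rewrite leqNgt; apply/negP => h; have := hlt _ h; rewrite fixn ltnn //.
Qed.

Section Dyn.
Variable R : realType.
Variable q : R.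
Hypothesis hq0 : 0 < q.
Variable w : nat.
Hypothesis hw : (2 <= w)%N.

Definition tfl (v : nat) : int := Num.floor (q * (v + (w - 1))%:R).

Lemma tfl_mono u v : (u <= v)%N -> tfl u <= tfl v.
Proof.
move=> h; apply: le_floor; apply: ler_wpM2l; first exact: ltW.
by rewrite ler_nat leq_add2r.
Qed.

Definition Bset (x : 'I_(w - 1) -> nat) (m : nat) := [set i | tfl (x i) <= m%:Z].
Definition cfun x m := #|Bset x m|.

Lemma Bset_mono x m m' : (m <= m')%N -> Bset x m \subset Bset x m'.
Proof.
move=> h; apply/subsetP => i; rewrite !inE => hi; apply: le_trans hi _.
by rewrite lez_nat.
Qed.

Lemma step_B x A : step q x A = A :|: Bset x #|A|.
Proof.
rewrite /step; congr (_ :|: _); apply/setP => i; rewrite !inE.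
have hD : 0 < (x i + (w - 1))%:R :> R.
  rewrite ltr0n; apply: (leq_trans _ (leq_addl _ _)); by rewrite subn_gt0.
by rewrite ltr_pdivlMr // add1n lt_floor_nat.
Qed.

Lemma iter_step x k :
  iter k (step q x) set0 \subset Bset x #|iter k (step q x) set0|
  /\ #|iter k (step q x) set0| = iter k (cfun x) 0%N.
Proof.
elim: k => [|k [IH1 IH2]] /=; first by split; [exact: sub0set | rewrite cards0].
rewrite step_B (setUidPr IH1); split; last by rewrite /cfun IH2.
by apply: Bset_mono; apply: subset_leq_card.
Qed.

Lemma finalL_iter x : finalL q x = iter (w - 1) (cfun x) 0%N.
Proof. by rewrite /finalL; case: (iter_step x (w - 1)). Qed.

Definition Pl (m : nat) : pred nat := fun v => tfl v <= m%:Z.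

Lemma Pl_dclosed m : dclosed (Pl m).
Proof. move=> u v huv; rewrite /Pl => hv; exact: le_trans (tfl_mono huv) hv. Qed.

Lemma cfun_count x m : cfun x m = count (Pl m) [seq x i | i <- enum 'I_(w - 1)].
Proof. by rewrite /cfun /Bset card_count count_map. Qed.

Lemma finalL_iff x l : finalL q x = l <->
  count (Pl l) [seq x i | i <- enum 'I_(w - 1)] = l /\
  (forall m, (m < l)%N -> (m < count (Pl m) [seq x i | i <- enum 'I_(w - 1)])%N).
Proof.
rewrite finalL_iter iter_fix.
- split=> -[h1 h2]; split.
  + by rewrite -cfun_count.
  + by move=> m hm; rewrite -cfun_count; apply: h2.
  + by rewrite cfun_count.
  + by move=> m hm; rewrite cfun_count; apply: h2.
- by move=> a b hab; apply: subset_leq_card; apply: Bset_mono.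
- by move=> m; rewrite /cfun; have := max_card (Bset x m); rewrite card_ord.
Qed.

Lemma event_equiv (x : 'I_(w - 1) -> nat) l xs :
  size xs = l -> sorted leq xs -> (l <= w - 1)%N ->
  (finalL q x == l) && (take l (order_stats x) == xs)
  = [forall i : 'I_l, tfl (nth 0%N xs i) <= (i : nat)%:Z]
    && perm_eq (filter (Pl l) [seq x i | i <- enum 'I_(w - 1)]) xs.
Proof.
move=> hsx hsorted hlw.
set s := [seq x i | i <- enum 'I_(w - 1)].
have hys : sorted leq (sort leq s) := sort_sorted leq_total s.
have pys : perm_eq (sort leq s) s by rewrite perm_sort.
have cnt : forall m, count (Pl m) (sort leq s) = count (Pl m) s.
  by move=> m; apply/permP.
have hsz : size (sort leq s) = (w - 1)%N by rewrite size_sort size_map size_enum_ord.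
apply/idP/idP.
- move=> /andP[/eqP hL /eqP ht]; have [h1 h2] := (finalL_iff x l).1 hL.
  rewrite /order_stats -/s in ht.
  apply/andP; split.
  + apply/forallP => i; have hi := ltn_ord i.
    rewrite -ht nth_take //.
    have hi' : (i < size (sort leq s))%N by rewrite hsz; exact: leq_trans hi hlw.
    have := nth_dclosed hys (@Pl_dclosed (nat_of_ord i)) hi'; rewrite /Pl => ->.
    by rewrite cnt; exact: h2.
    have e : take l (sort leq s) = filter (Pl l) (sort leq s).
      by rewrite (filter_dclosed hys (@Pl_dclosed l)) cnt h1.
    by rewrite -ht e perm_filter // perm_sym.
- move=> /andP[/forallP hI hG].
  have c_l : count (Pl l) s = l by rewrite -size_filter (perm_size hG).
  have hL : finalL q x = l.
    apply/(finalL_iff x l).2; split => // m hm.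
    have hm' : (m < size xs)%N by rewrite hsx.
    have hP : Pl m (nth 0%N xs m) by exact: (hI (Ordinal hm)).
    rewrite (nth_dclosed hsorted (@Pl_dclosed m) hm') in hP.
    apply: (leq_trans hP); rewrite -(permP hG) count_filter.
    by apply: sub_count => v /andP[].
  rewrite hL eqxx /=; apply/eqP; rewrite /order_stats -/s.
  have -> : take l (sort leq s) = filter (Pl l) (sort leq s).
    by rewrite (filter_dclosed hys (@Pl_dclosed l)) cnt c_l.
  apply: (sorted_eq leq_trans anti_leq (sorted_filter leq_trans _ hys) hsorted).
  exact: perm_trans (perm_filter _ pys) hG.
Qed.
End Dyn.

Lemma leqP2 m n : (m <= n)%N -> (m.-1 <= n.-1)%N.
Proof. by case: m n => [|m] [|n]. Qed.

Lemma pX_zero (R : realType) (p qw : nat -> R) (dbar wbar : nat)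
  (hqsupp : forall v, (wbar < v)%N -> qw v = 0) k :
  (Xsupp dbar wbar <= k)%N -> pX p qw dbar wbar k = 0.
Proof.
move=> hk; rewrite /pX big_nat_cond; apply: big1 => d /andP[/andP[hd1 hd2] _].
rewrite big1 ?mulr0 // => f /andP[/forallP hpos /eqP hsum].
case: (boolP [exists j, (wbar < f j)%N]) => [/existsP[j hj] | hn].
  by rewrite (bigD1 j) //= hqsupp // !(mulr0, mul0r).
exfalso; move/existsPn: hn => hn.
have hle : (\sum_j (f j : nat).-1 <= \sum_(j < d.-1) wbar.-1)%N.
  apply: leq_sum => j _; apply: leqP2.
  by have := hn j; rewrite ltnNge negbK.
rewrite sum_nat_const card_ord hsum in hle.
have : (d.-1 * wbar.-1 <= dbar.-1 * wbar.-1)%N.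
  by apply: leq_mul => //; apply: leqP2; rewrite -ltnS.
move=> h2; have := leq_trans hle h2; rewrite leqNgt.
by move: hk; rewrite /Xsupp => hk; rewrite hk.
Qed.

Lemma gen (R : realType) (p qw : nat -> R) (dbar wbar : nat)
  (hqsupp : forall v, (wbar < v)%N -> qw v = 0)
  (q : R) (hq0 : 0 < q) (w : nat) (hw : (2 <= w)%N) (l : nat) (xs : seq nat) :
  size xs = l -> sorted leq xs -> (l <= w - 1)%N ->
  PrIID p qw dbar wbar
    (fun x : 'I_(w - 1) -> nat => (finalL q x == l) && (take l (order_stats x) == xs))
  = ([forall i : 'I_l, tfl q w (nth 0%N xs i) <= (i : nat)%:Z])%:R *
    ((w - 1)`!%:R / ((w - 1 - l)`! * Pf xs)%N%:R
     * (\prod_(i < l) pX p qw dbar wbar (nth 0%N xs i))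
     * (PrX p qw dbar wbar (fun k => (l%:Z < Num.floor (q * (k + (w - 1))%:R))))
         ^+ (w - 1 - l)).
Proof.
move=> hsx hsorted hlw.
set N := Xsupp dbar wbar.
set f := pX p qw dbar wbar.
rewrite /PrIID.
rewrite (eq_bigr (fun x : {ffun 'I_(w - 1) -> 'I_N} => (\prod_i f (x i)) *
   ([forall i : 'I_l, tfl q w (nth 0%N xs i) <= (i : nat)%:Z]
    && perm_eq (filter (Pl q w l) [seq (x i : nat) | i <- enum 'I_(w - 1)]) xs)%:R));
  last by move=> x _; rewrite (event_equiv hq0 hw).
case: (boolP [forall i : 'I_l, _]) => hI; last first.
  by rewrite mul0r big1 // => x _; rewrite mulr0.
rewrite mul1r.
transitivity (Fc N (Pl q w l) f (w - 1) xs); first by [].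
have hall : all (fun v => Pl q w l v && (v < N)%N) xs \/ ~~ all (fun v => (v < N)%N) xs.
  case: (boolP (all (fun v => (v < N)%N) xs)) => hN; last by right.
  left; apply/(all_nthP 0%N) => i hi; rewrite (all_nthP 0%N hN) // andbT.
  have hil : (i < l)%N by rewrite -hsx.
  apply: le_trans (forallP hI (Ordinal hil)) _ => /=; by rewrite lez_nat ltnW.
case: hall => [hall|hN].
  have H := @Fc_closed R N (Pl q w l) f (w - 1) xs hall (leq_trans (eq_leq hsx) hlw).
  rewrite hsx -(Pf_Mc (N := N)) // in H; last by apply: sub_all hall => v /andP[].
  have hK : ((w - 1 - l)`! * Pf xs)%N%:R != 0 :> R.
    rewrite pnatr_eq0 -lt0n muln_gt0 fact_gt0 /Pf prodn_gt0 // => i; exact: fact_gt0.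
  have ep : \prod_(v <- xs) f v = \prod_(i < l) f (nth 0%N xs i).
    by rewrite (big_nth 0%N) big_mkord hsx.
  have ea : acoef N (Pl q w l) f
          = PrX p qw dbar wbar (fun k => (l%:Z < Num.floor (q * (k + (w - 1))%:R))).
    by rewrite /acoef /PrX; apply: eq_bigl => k; rewrite /Pl ltNge.
  rewrite ep ea in H.
  apply: (mulIf hK); rewrite H.
  field; rewrite !pnatr_eq0 -!lt0n fact_gt0 andbT /Pf prodn_gt0 // => i; exact: fact_gt0.
move/allPn: hN => [v hv hvN].
have hvi := nth_index 0%N hv.
have hil : (index v xs < l)%N by rewrite -hsx index_mem.
have Fz : Fc N (Pl q w l) f (w - 1) xs = 0.
  apply: big1 => x _; apply/eqP; rewrite mulf_eq0 pnatr_eq0 eqb0; apply/orP; right.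
  apply/negP => /perm_mem hpm; have := hpm v; rewrite hv mem_filter => /andP[_ /mapP[i _ hi]].
  by move: hvN; rewrite hi ltn_ord.
have hXv : (Xsupp dbar wbar <= v)%N by rewrite leqNgt.
by rewrite Fz (bigD1 (Ordinal hil)) //= hvi /f (@pX_zero R p qw dbar wbar hqsupp v hXv) !(mul0r, mulr0).
Qed.
Theorem lemma2 (R : realType) (p qw : nat -> R) (dbar wbar : nat)
  (hdbar : (1 <= dbar)%N) (hwbar : (1 <= wbar)%N)
  (hp0 : forall d, 0 <= p d) (hp1 : \sum_(d < dbar.+1) p d = 1)
  (hpsupp : forall d, (dbar < d)%N -> p d = 0)
  (hq0 : forall v, 0 <= qw v) (hq1 : \sum_(v < wbar.+1) qw v = 1)
  (hqsupp : forall v, (wbar < v)%N -> qw v = 0)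
  (hlam : 0 < mean p dbar) (hmu : 0 < mean qw wbar)
  (hp00 : p 0%N = 0) (hq00 : qw 0%N = 0) (hq01 : qw 1%N = 0)
  (q : R) (hq : 0 < q < 1) (w : nat) (hw : (2 <= w)%N) :
  (forall (l : nat) (xs : seq nat),
     (1 <= l <= w - 1)%N -> size xs = l -> sorted leq xs ->
     PrIID p qw dbar wbar
       (fun x : 'I_(w - 1) -> nat => (finalL q x == l) && (take l (order_stats x) == xs))
     = (\prod_(i < l)
          ((Num.floor (q * (nth 0%N xs i + (w - 1))%:R) + 1 <= (i.+1)%:Z)%R)%:R)
       * ((w - 1)`!)%:R / (((w - 1 - l)`! * \prod_(i < l.-1) (s_mult xs i)`!)%N)%:R
       * (\prod_(i < l) pX p qw dbar wbar (nth 0%N xs i))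
       * (PrX p qw dbar wbar
            (fun k => (l%:Z < Num.floor (q * (k + (w - 1))%:R))%R)) ^+ (w - 1 - l))
  /\
  PrIID p qw dbar wbar (fun x : 'I_(w - 1) -> nat => finalL q x == 0%N)
  = (PrX p qw dbar wbar (fun k => (0 < Num.floor (q * (k + (w - 1))%:R))%R))
      ^+ (w - 1).
Proof.
have hqpos : 0 < q by case/andP: hq.
split.
  move=> l xs /andP[hl1 hlw] hsx hsorted.
  rewrite (@gen R p qw dbar wbar hqsupp q hqpos w hw l xs hsx hsorted hlw).
  have -> : (\prod_(i < l.-1) (s_mult xs i)`!)%N = Pf xs by rewrite -hsx prod_smult.
  have -> : \prod_(i < l)
          ((Num.floor (q * (nth 0%N xs i + (w - 1))%:R) + 1 <= (i.+1)%:Z)%R)%:R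
        = ([forall i : 'I_l, tfl q w (nth 0%N xs i) <= (i : nat)%:Z])%:R :> R.
    have e : forall i : nat, (i.+1)%:Z = i%:Z + 1 by move=> i; rewrite -[in LHS]addn1 PoszD.
    case: (boolP [forall i : 'I_l, _]) => h.
      apply: big1 => i _; have := forallP h i; rewrite /tfl => hi.
      by rewrite e lerD2r hi.
    move/forallPn: h => [i hi]; rewrite (bigD1 i) //= e lerD2r.
    by rewrite /tfl in hi; rewrite (negbTE hi) mul0r.
  by rewrite !mulrA.
have -> : PrIID p qw dbar wbar (fun x : 'I_(w - 1) -> nat => finalL q x == 0%N)
   = PrIID p qw dbar wbar (fun x : 'I_(w - 1) -> nat =>
        (finalL q x == 0%N) && (take 0 (order_stats x) == [::])).
  by apply: eq_bigr => x _; rewrite take0 eqxx andbT.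
rewrite (@gen R p qw dbar wbar hqsupp q hqpos w hw 0 [::] erefl erefl (leq0n _)).
have -> : [forall i : 'I_0, tfl q w (nth 0%N [::] i) <= (i : nat)%:Z] = true.
  by apply/forallP => -[].
rewrite big_ord0 subn0 /Pf big_ord0 muln1 mulr1 mul1r divff ?mul1r //.
by rewrite pnatr_eq0 -lt0n fact_gt0.
Qed.
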